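(* Let $\mathcal X=(x_n)_{n\in\mathbb N}$ be a fundamental minimal system for $\mathbb X$ whose dual system $\mathcal X^*=(x_n^* )$ satisfies $\alpha_2:=\sup_n\|x_n^*\|<\infty$. If $\langle\mathcal X^*\rangle$ is not a norming subspace of $\mathbb X^*$, then for every $\epsilon>0$, $r>0$ and $m\in\mathbb N$ there is $f\in\mathbb X$ such that: (i) $f\in\langle\mathcal X_{>m}\rangle$ and $\|f\|=r$; (ii) $\|f\|_\infty<\epsilon$; (iii) for each $n>m$ and each $\delta>0$ there is $g\in\langle\mathcal X_{>n}\rangle$ with $\|g\|_\infty<\delta$ and $\|f+g\|<\epsilon$.
   Context: Throughout, $\mathbb X$ is an infinite-dimensional separable Banach space over $\mathbb F\in\{\mathbb R,\mathbb C\}$. A (fundamental minimal) system for $\mathbb X$ is a sequence $\mathcal X=(x_n)_{n\in\mathbb N}\subset\mathbb X$ whose linear span $\langle\mathcal X\rangle$ is dense in $\mathbb X$ and for which there is a sequence $\mathcal X^*=(x_n^* )_{n\in\mathbb N}\subset\mathbb X^*$ with $x_n^*(x_k)=\delta_{nk}$ for all $n,k$; $\mathcal X^*$ is called the dual system. For $f\in\mathbb X$, $\|f\|_\infty:=\sup_n|x_n^*(f)|$. For $m\in\mathbb N$, $\mathcal X_{>m}=(x_n)_{n>m}$ and $\langle\mathcal X_{>m}\rangle$ is its linear span. A subspace $\mathbb Z\subset\mathbb X^*$ is norming if there is $c\in(0,1]$ with $c\|f\|\le\sup\{|f^*(f)|: f^*\in\mathbb Z,\ \|f^*\|=1\}$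 for all $f\in\mathbb X$. *)

(* Defs.v *)
From HB Require Import structures.
From mathcomp Require Import all_boot all_order all_algebra.
From mathcomp Require Import all_classical all_reals all_analysis.
From mathcomp Require Export complex.
Import Order.TTheory GRing.Theory Num.Theory.
Import numFieldNormedType.Exports.
Set Implicit Arguments.
Unset Strict Implicit.
Unset Printing Implicit Defensive.
Local Open Scope ring_scope.
Local Open Scope classical_set_scope.

Section Defs.
Context {K : numFieldType} {X : normedModType K}.

Definition dual_elem (g : X -> K) : Prop :=
  (forall (a : K) (u v : X), g (a *: u + v) = a * g u + g v) /\ continuous g.

Definition is_sup (S : set K) (r : K) : Prop :=
  (forall s, S s -> s <= r) /\ (forall t, t < r -> exists2 s, S s & t < s).

Definition dual_norm (g : X -> K) (r : K) : Prop :=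
  is_sup [set `|g x| | x in [set x : X | `|x| <= 1]] r.

Definition span_seq (x : nat -> X) : set X :=
  [set v | exists (N : nat) (c : nat -> K), v = \sum_(i < N) c i *: x i].

Definition span_gt (x : nat -> X) (m : nat) : set X :=
  [set v | exists (N : nat) (c : nat -> K), v = \sum_(m.+1 <= i < N) c i *: x i].

Definition dual_span (xs : nat -> X -> K) : set (X -> K) :=
  [set g | exists (N : nat) (c : nat -> K),
           g = (fun v => \sum_(i < N) c i * xs i v)].

Definition fund_min_system (x : nat -> X) (xs : nat -> X -> K) : Prop :=
  closure (span_seq x) = setT /\
  (forall n, dual_elem (xs n)) /\
  (forall n k, xs n (x k) = (n == k)%:R).

(* ||f||_oo < e, where ||f||_oo = sup_n |x_n^*(f)|. *)
Definition supnorm_lt (xs : nat -> X -> K) (f : X) (e : K) : Prop :=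
  exists2 e' : K, e' < e & forall n, `|xs n f| <= e'.

(* A subspace Z of X^* is norming: there is c in (0,1] with
   c ||f|| <= sup { |g f| : g in Z, ||g|| = 1 } for all f. *)
Definition norming (Z : set (X -> K)) : Prop :=
  exists2 c : K, 0 < c <= 1 &
    forall f : X, forall t : K, t < c * `|f| ->
      exists g, [/\ Z g, dual_norm g 1 & t < `|g f|].

End Defs.

Definition lemma3p7_for (K : numFieldType) (X : completeNormedModType K) : Prop :=
  forall (x : nat -> X) (xs : nat -> X -> K),
    fund_min_system x xs ->
    (exists alpha2 : K, forall n r, dual_norm (xs n) r -> r <= alpha2) ->
    ~ norming (dual_span xs) ->
    forall (eps r : K) (m : nat), 0 < eps -> 0 < r ->
      exists f : X,
        [/\ span_gt x m f, `|f| = r,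
            supnorm_lt xs f eps &
            forall n : nat, (m < n)%N -> forall delta : K, 0 < delta ->
              exists g : X,
                [/\ span_gt x n g, supnorm_lt xs g delta & `|f + g| < eps]].

(* Main.v *)
Require Import Defs.
From HB Require Import structures.
From mathcomp Require Import all_boot all_order all_algebra.
From mathcomp Require Import all_classical all_reals all_analysis.
From mathcomp Require Import complex.
From mathcomp Require Import ring lra.
Import Order.TTheory GRing.Theory Num.Theory.
Import numFieldNormedType.Exports.
Set Implicit Arguments.
Unset Strict Implicit.
Unset Printing Implicit Defensive.
Local Open Scope ring_scope.
Local Open Scope classical_set_scope.

Section SupAux.
Variable R : realType.
Lemma supUB (E : set R) B e : (forall s, E s -> s <= B) -> E e -> e <= sup E.
Proof. move=> hB He; apply: ub_le_sup => //; by exists B. Qed.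
Lemma supLE (E : set R) B : E !=set0 -> (forall s, E s -> s <= B) -> sup E <= B.
Proof. by move=> ne hB; apply: ge_sup. Qed.
Lemma infLB (E : set R) B e : (forall s, E s -> B <= s) -> E e -> inf E <= e.
Proof. move=> hB He; apply: ge_inf => //; by exists B. Qed.
Lemma infGE (E : set R) B : E !=set0 -> (forall s, E s -> B <= s) -> B <= inf E.
Proof. by move=> ne hB; apply: lb_le_inf. Qed.
End SupAux.

Section HahnBanach.
Variables (R : realType) (V : lmodType R) (e : nat -> V) (p : V -> R).
Hypothesis p_add : forall u v, p (u + v) <= p u + p v.
Hypothesis p_hom : forall (s : R) (u : V), 0 < s -> p (s *: u) <= s * p u.
Variable w0 : R.
Hypothesis hw0 : forall s, s * w0 <= p (s *: e 0%N).

Definition vec N (c : nat -> R) := \sum_(i < N) c i *: e i.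

Lemma p_homE (s : R) (u : V) : 0 < s -> p (s *: u) = s * p u.
Proof.
move=> s0; apply/le_anti; rewrite p_hom //=.
have := @p_hom s^-1 (s *: u); rewrite invr_gt0 s0 => /(_ isT); rewrite scalerA mulVf ?gt_eqF // scale1r.
by move=> h; rewrite -(@ler_pM2l _ s^-1) ?invr_gt0 // mulrA mulVf ?gt_eqF // mul1r.
Qed.

Lemma p0 : 0 <= p 0.
Proof. by have := p_add 0 0; rewrite addr0 -{1}(addr0 (p 0)) lerD2l. Qed.

Fixpoint W (k : nat) : nat -> R :=
  match k with
  | 0 => fun _ => w0
  | k'.+1 => let f := W k' in
     fun i => if (i < k'.+1)%N then f i else
       sup [set \sum_(j < k'.+1) c j * f j - p (vec k'.+1 c - e k'.+1) | c in [set: nat -> R]]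
  end.

Lemma W_prefix k i : (i <= k)%N -> W k i = W i i.
Proof.
elim: k => [|k IH] hi; first by rewrite leqn0 in hi; rewrite (eqP hi).
rewrite leq_eqVlt in hi; case/orP: hi => [/eqP -> //|hi].
by rewrite /= hi IH.
Qed.

Lemma vecS k c : vec k.+1 c = vec k c + c k *: e k.
Proof. by rewrite /vec big_ord_recr. Qed.

Lemma vec_scale k a c : vec k (fun i => a * c i) = a *: vec k c.
Proof. by rewrite /vec scaler_sumr; apply: eq_bigr => i _; rewrite scalerA. Qed.

Lemma vec_add k c d : vec k (fun i => c i + d i) = vec k c + vec k d.
Proof. by rewrite /vec -big_split; apply: eq_bigr => i _; rewrite scalerDl. Qed.

Lemma W_inv k : forall c : nat -> R, \sum_(i < k.+1) c i * W k i <= p (vec k.+1 c).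
Proof.
elim: k => [|k IH] c.
  by rewrite big_ord1 /vec big_ord1 /=.
set f := W k.
set S := [set \sum_(j < k.+1) c j * f j - p (vec k.+1 c - e k.+1) | c in [set: nat -> R]].
have phi_add : forall c d : nat -> R, \sum_(j < k.+1) (c j + d j) * f j =
   \sum_(j < k.+1) c j * f j + \sum_(j < k.+1) d j * f j.
  by move=> c1 d1; rewrite -big_split; apply: eq_bigr => j _; rewrite mulrDl.
have phi_scale : forall a (c : nat -> R), \sum_(j < k.+1) (a * c j) * f j = a * \sum_(j < k.+1) c j * f j.
  by move=> a c1; rewrite mulr_sumr; apply: eq_bigr => j _; rewrite mulrA.
have key : forall c d : nat -> R, \sum_(j < k.+1) c j * f j - p (vec k.+1 c - e k.+1) <=
    p (vec k.+1 d + e k.+1) - \sum_(j < k.+1) d j * f j.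
  move=> c1 d1; have h1 := IH (fun j => c1 j + d1 j).
  rewrite phi_add vec_add in h1.
  have h2 := p_add (vec k.+1 c1 - e k.+1) (vec k.+1 d1 + e k.+1).
  rewrite addrACA addNr addr0 in h2. lra.
have hS : forall s, S s -> s <= p (vec k.+1 (fun=> 0) + e k.+1) - \sum_(j < k.+1) 0 * f j.
  by move=> s [c1 _ <-]; apply: key.
have neS : S !=set0 by exists (\sum_(j < k.+1) 0 * f j - p (vec k.+1 (fun=> 0) - e k.+1)), (fun=> 0).
have Wk1 : W k.+1 k.+1 = sup S by rewrite /= ltnn.
have ub1 : forall c : nat -> R, \sum_(j < k.+1) c j * f j - p (vec k.+1 c - e k.+1) <= sup S.
  by move=> c1; apply: (supUB hS); exists c1.
have ub2 : forall d : nat -> R, sup S <= p (vec k.+1 d + e k.+1) - \sum_(j < k.+1) d j * f j.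
  by move=> d; apply: supLE => // s [c1 _ <-]; apply: key.
rewrite big_ord_recr /= ltnn.
have -> : \sum_(i < k.+1) c i * W k.+1 i = \sum_(i < k.+1) c i * f i.
  by apply: eq_bigr => i _; rewrite /= ltn_ord.
rewrite vecS.
have [ck0|ck0|ck0] := ltrgtP (c k.+1) 0; last first.
- by rewrite ck0 mul0r scale0r addr0 addr0; apply: IH.
-
  set s := c k.+1.
  have := ub2 (fun i => s^-1 * c i); rewrite phi_scale vec_scale.
  have -> : s^-1 *: vec k.+1 c + e k.+1 = s^-1 *: (vec k.+1 c + s *: e k.+1).
    by rewrite scalerDr scalerA mulVf ?gt_eqF // scale1r.
  rewrite p_homE ?invr_gt0 // -mulrBr => h.
  have := h; rewrite -(ler_pM2l ck0) mulrA mulfV ?gt_eqF // mul1r.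
  move=> h2; rewrite /s in h h2 *; rewrite -/f -/S; lra.
- set s := c k.+1.
  have t0 : 0 < - s by rewrite oppr_gt0.
  have := ub1 (fun i => (- s)^-1 * c i); rewrite phi_scale vec_scale.
  have -> : (- s)^-1 *: vec k.+1 c - e k.+1 = (- s)^-1 *: (vec k.+1 c + s *: e k.+1).
    by rewrite scalerDr scalerA invrN mulNr mulVf ?lt_eqF // scaleN1r.
  rewrite p_homE ?invr_gt0 // -mulrBr => h.
  have := h; rewrite -(ler_pM2l t0) mulrA mulfV ?gt_eqF // mul1r.
  move=> h2; rewrite /s in h h2 *; rewrite -/f -/S; lra.
Qed.

Lemma hahn_banach_seq : exists w : nat -> R, w 0%N = w0 /\
  forall N (c : nat -> R), \sum_(i < N) c i * w i <= p (vec N c).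
Proof.
exists (fun i => W i i); split => // -[|k] c.
  by rewrite big_ord0 /vec big_ord0; apply: p0.
have -> : \sum_(i < k.+1) c i * W i i = \sum_(i < k.+1) c i * W k i.
  by apply: eq_bigr => i _; rewrite W_prefix // -ltnS.
exact: W_inv.
Qed.
End HahnBanach.


Lemma sum_pad (Z : zmodType) (F : nat -> Z) N1 N :
  (forall i, (N1 <= i)%N -> F i = 0) -> (N1 <= N)%N ->
  \sum_(i < N1) F i = \sum_(i < N) F i.
Proof.
move=> hF hN; rewrite (big_ord_widen N) // big_mkcond /=; apply: eq_bigr => i _.
by case: ifP => // /negbT; rewrite -leqNgt => h; rewrite hF.
Qed.

Lemma le_eps (R : realFieldType) (a b K : R) : 0 <= K ->
  (forall e, 0 < e -> a <= b + K * e) -> a <= b.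
Proof.
move=> K0 h; apply/ler_addgt0Pr => e e0.
have K1 : 0 < K + 1 by lra.
have := h (e / (K + 1)); rewrite divr_gt0 // => /(_ isT) h1.
apply: le_trans h1 _; rewrite lerD2l mulrA ler_pdivrMr //; nra.
Qed.

Section Core.
Variables (R : realType) (V : lmodType R) (nrm : V -> R).
Hypothesis nrmD : forall u v, nrm (u + v) <= nrm u + nrm v.
Hypothesis nrmZ : forall (a : R) (u : V), nrm (a *: u) = `|a| * nrm u.
Variables (y : nat -> V) (ys : nat -> V -> R).
Hypothesis ysL : forall n (a : R) u v, ys n (a *: u + v) = a * ys n u + ys n v.
Hypothesis ysB : forall n k, ys n (y k) = (n == k)%:R.
Variable A : R.
Hypothesis A0 : 0 < A.
Hypothesis ysA : forall n u, `|ys n u| <= A * nrm u.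
Hypothesis dense : forall v (eta : R), 0 < eta ->
  exists N (c : nat -> R), nrm (v - \sum_(i < N) c i *: y i) < eta.
Definition Phi N (w : nat -> R) u := \sum_(i < N) w i * ys i u.
Hypothesis NN : forall kappa : R, 0 < kappa -> exists v, nrm v = 1 /\
  forall N w, (forall u, `|Phi N w u| <= nrm u) -> `|Phi N w v| <= kappa.

Lemma nrm0 : nrm 0 = 0.
Proof. by have := nrmZ 0 0; rewrite scale0r normr0 mul0r. Qed.
Lemma nrmN u : nrm (- u) = nrm u.
Proof. by rewrite -scaleN1r nrmZ normrN normr1 mul1r. Qed.
Lemma nrm_ge0 u : 0 <= nrm u.
Proof. have := nrmD u (- u); rewrite subrr nrm0 nrmN; lra. Qed.
Lemma nrmB u v : nrm (u - v) <= nrm u + nrm v.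
Proof. by rewrite -(nrmN v); apply: nrmD. Qed.
Lemma nrm_tri u v w : nrm (u - w) <= nrm (u - v) + nrm (v - w).
Proof. by have := nrmD (u - v) (v - w); rewrite addrA subrK. Qed.
Lemma nrm_sum N (F : nat -> V) : nrm (\sum_(i < N) F i) <= \sum_(i < N) nrm (F i).
Proof.
elim: N => [|N IH]; first by rewrite !big_ord0 nrm0.
rewrite !big_ord_recr /=; apply: le_trans (nrmD _ _) _; lra.
Qed.

Lemma ys0 n : ys n 0 = 0.
Proof. have := ysL n 1 0 0; rewrite scale1r addr0 mul1r => h; lra. Qed.
Lemma ysD n u v : ys n (u + v) = ys n u + ys n v.
Proof. by have := ysL n 1 u v; rewrite scale1r mul1r. Qed.
Lemma ysZ n a u : ys n (a *: u) = a * ys n u.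
Proof. by have := ysL n a u 0; rewrite addr0 ys0 addr0. Qed.
Lemma ysN n u : ys n (- u) = - ys n u.
Proof. by rewrite -scaleN1r ysZ mulN1r. Qed.
Lemma ysB' n u v : ys n (u - v) = ys n u - ys n v.
Proof. by rewrite ysD ysN. Qed.
Lemma ys_sum n N (F : nat -> V) : ys n (\sum_(i < N) F i) = \sum_(i < N) ys n (F i).
Proof.
elim: N => [|N IH]; first by rewrite !big_ord0 ys0.
by rewrite !big_ord_recr /= ysD IH.
Qed.
Lemma ys_comb k N (c : nat -> R) :
  ys k (\sum_(i < N) c i *: y i) = if (k < N)%N then c k else 0.
Proof.
rewrite (ys_sum k N (fun i => c i *: y i)).
under eq_bigr => i _ do rewrite ysZ ysB.
case: ifP => hk.
  rewrite (bigD1 (Ordinal hk)) //= eqxx mulr1 big1 ?addr0 // => i hi.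
  by rewrite eq_sym -(inj_eq val_inj) /= in hi; rewrite (negbTE hi) mulr0.
by rewrite big1 // => i _; rewrite (_ : (k == i) = false) ?mulr0 //;
  apply/negbTE; apply: contraFN hk => /eqP ->.
Qed.
Lemma ys_comb_supp k N (c : nat -> R) :
  (forall i, (N <= i)%N -> c i = 0) -> ys k (\sum_(i < N) c i *: y i) = c k.
Proof. by move=> hc; rewrite ys_comb; case: ifP => // /negbT; rewrite -leqNgt => /hc ->. Qed.

Lemma PhiD N w u v : Phi N w (u + v) = Phi N w u + Phi N w v.
Proof. by rewrite /Phi -big_split; apply: eq_bigr => i _; rewrite ysD mulrDr. Qed.
Lemma PhiZ N w a u : Phi N w (a *: u) = a * Phi N w u.
Proof. by rewrite /Phi mulr_sumr; apply: eq_bigr => i _; rewrite ysZ mulrCA. Qed.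
Lemma PhiN N w u : Phi N w (- u) = - Phi N w u.
Proof. by rewrite -scaleN1r PhiZ mulN1r. Qed.
Lemma PhiB N w u v : Phi N w (u - v) = Phi N w u - Phi N w v.
Proof. by rewrite PhiD PhiN. Qed.

Lemma NN_B (kappa : R) : 0 < kappa -> exists v, nrm v = 1 /\
  forall N w B, 0 < B -> (forall u, `|Phi N w u| <= B * nrm u) -> `|Phi N w v| <= B * kappa.
Proof.
move=> k0; have [v [v1 hv]] := NN k0; exists v; split => // N w B B0 hB.
have hPhi : forall u, Phi N (fun i => B^-1 * w i) u = B^-1 * Phi N w u.
  by move=> u; rewrite /Phi mulr_sumr; apply: eq_bigr => i _; rewrite mulrA.
have : `|Phi N (fun i => B^-1 * w i) v| <= kappa.
  apply: hv => u; rewrite hPhi normrM ger0_norm; last by rewrite invr_ge0 ltW.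
  by rewrite -(ler_pM2l B0) mulrA mulfV ?gt_eqF // mul1r.
rewrite hPhi normrM ger0_norm; last by rewrite invr_ge0 ltW.
by rewrite -(ler_pM2l B0) mulrA mulfV ?gt_eqF // mul1r.
Qed.

Lemma Phi_ys k : forall u, Phi k.+1 (fun i => (i == k)%:R) u = ys k u.
Proof.
move=> u; rewrite /Phi big_ord_recr /= eqxx mul1r big1 ?add0r // => i _.
by rewrite (_ : (i == k :> nat) = false) ?mul0r //; apply/negbTE; rewrite neq_ltn ltn_ord.
Qed.

Definition Pk (kappa : R) (f : V) := forall N w B, 0 < B ->
  (forall u, `|Phi N w u| <= B * nrm u) -> `|Phi N w f| <= B * kappa.

Lemma choose_f (kappa r : R) (m : nat) : 0 < kappa -> 0 < r ->
  exists N (c : nat -> R), (forall i, (i <= m)%N -> c i = 0) /\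
    (forall i, (N <= i)%N -> c i = 0) /\
    nrm (\sum_(i < N) c i *: y i) = r /\ Pk kappa (\sum_(i < N) c i *: y i).
Proof.
move=> k0 r0.
set M1 := 2 * A * \sum_(i < m.+1) nrm (y i).
have M10 : 0 <= M1.
  apply: mulr_ge0; [apply: mulr_ge0 =>//; exact: ltW | apply: sumr_ge0 => i _; exact: nrm_ge0].
set eta := Num.min (2 * (1 + M1))^-1 (kappa / (2 * r * (2 + M1))).
have eta0 : 0 < eta.
  rewrite lt_min invr_gt0 divr_gt0 //; last by rewrite !mulr_gt0 //; lra.
  by rewrite mulr_gt0 //; lra.
have eta1 : eta * (1 + M1) <= 2^-1.
  have : eta <= (2 * (1 + M1))^-1 by rewrite ge_min lexx.
  rewrite invfM -ler_pdivlMr; last lra.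
  by rewrite mulrC.
have eta2 : 2 * r * (2 + M1) * eta <= kappa.
  have : eta <= kappa / (2 * r * (2 + M1)) by rewrite ge_min lexx orbT.
  rewrite ler_pdivlMr; last by rewrite !mulr_gt0 //; lra.
  by rewrite mulrC.
have [v [v1 hv]] := NN_B eta0.
have [N [c1 hz]] := dense v eta0.
pose c := fun i => if (i < N)%N then c1 i else 0.
have hc : forall i, (N <= i)%N -> c i = 0 by move=> i hi; rewrite /c ltnNge hi.
have zE : \sum_(i < N) c1 i *: y i = \sum_(i < N) c i *: y i.
  by apply: eq_bigr => i _; rewrite /c ltn_ord.
rewrite zE in hz; clear zE.
set z := \sum_(i < N) c i *: y i in hz.
have ysv : forall i, `|ys i v| <= A * eta.
  move=> i; rewrite -(Phi_ys i v); apply: hv => // u; rewrite Phi_ys; exact: ysA.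
have ysz : forall i, `|ys i z| <= 2 * A * eta.
  move=> i; have -> : ys i z = ys i v - ys i (v - z) by rewrite ysB' opprB addrC subrK.
  apply: le_trans (ler_normB _ _) _.
  have := ysv i; have := ysA i (v - z).
  have : A * nrm (v - z) <= A * eta by rewrite ler_pM2l // ltW.
  lra.
set N' := maxn N m.+1.
set c' := fun i => if (i <= m)%N then 0 else c i.
set f0 := \sum_(i < N') c' i *: y i.
have zN' : z = \sum_(i < N') c i *: y i.
  by rewrite /z (@sum_pad _ (fun i => c i *: y i) N N') ?leq_maxl // => i hi; rewrite hc // scale0r.
have hf0 : f0 = z - \sum_(i < m.+1) ys i z *: y i.
  rewrite (big_ord_widen N' (fun i => ys i z *: y i)) ?leq_maxr // big_mkcond /=.
  rewrite {1}zN' -sumrB; apply: eq_bigr => i _; rewrite /z ys_comb_supp // /c'.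
  case: (leqP i m) => hi.
    by rewrite (_ : (i < m.+1)%N) //= ?ltnS // subrr scale0r.
  by rewrite (_ : (i < m.+1)%N = false) ?subr0 //; rewrite ltnS leqNgt hi.
have dzf0 : nrm (z - f0) <= eta * M1.
  rewrite hf0 opprB addrC subrK.
  apply: le_trans (nrm_sum m.+1 (fun i => ys i z *: y i)) _.
  apply: le_trans (_ : _ <= \sum_(i < m.+1) 2 * A * eta * nrm (y i)) _.
    by apply: ler_sum => i _; rewrite nrmZ; apply: ler_wpM2r => //; apply: nrm_ge0.
  rewrite -mulr_sumr /M1; nra.
have dvf0 : nrm (v - f0) <= eta * (1 + M1).
  have := nrm_tri v z f0; have := ltW hz; lra.
have nf0 : 2^-1 <= nrm f0.
  have := nrmD f0 (v - f0); rewrite addrC subrK v1; lra.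
have nf0p : 0 < nrm f0 by apply: lt_le_trans nf0; rewrite invr_gt0; lra.
set s := r / nrm f0.
have s0 : 0 < s by rewrite /s divr_gt0.
have s2 : s <= 2 * r.
  rewrite /s ler_pdivrMr //; have : 2 * r * 2^-1 <= 2 * r * nrm f0.
    by rewrite ler_pM2l //; lra.
  by rewrite mulrAC mulfV ?mul1r //; lra.
exists N', (fun i => s * c' i); split.
  by move=> i hi; rewrite /c' hi mulr0.
split.
  move=> i hi; rewrite /c'; case: ifP => _; rewrite ?mulr0 // hc ?mulr0 //.
  exact: leq_trans (leq_maxl N m.+1) hi.
have fE : \sum_(i < N') (s * c' i) *: y i = s *: f0.
  by rewrite /f0 scaler_sumr; apply: eq_bigr => i _; rewrite scalerA.
rewrite fE; split.
  by rewrite nrmZ gtr0_norm // /s -mulrA mulVf ?mulr1 // gt_eqF.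
move=> M w B B0 hB.
rewrite PhiZ normrM gtr0_norm //.
have h1 : `|Phi M w v| <= B * eta by apply: hv.
have h2 : `|Phi M w (f0 - v)| <= B * (eta * (1 + M1)).
  apply: le_trans (hB _) _; rewrite ler_pM2l //; by rewrite -nrmN opprB.
have h3 : `|Phi M w f0| <= B * (eta * (2 + M1)).
  have -> : f0 = v + (f0 - v) by rewrite addrC subrK.
  rewrite PhiD; apply: le_trans (ler_normD _ _) _; nra.
have h4 : 0 <= `|Phi M w f0| by [].
apply: le_trans (_ : s * `|Phi M w f0| <= 2 * r * (B * (eta * (2 + M1)))) _.
  by apply: ler_pM => //; apply: ltW.
have : 0 <= eta * M1 by apply: mulr_ge0 => //; apply: ltW.
nra.
Qed.
Definition Tl n (g : V) (t : R) := exists N (c : nat -> R),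
  [/\ (forall i, (i <= n)%N -> c i = 0), (forall i, (N <= i)%N -> c i = 0),
      (forall i, `|c i| <= t) & g = \sum_(i < N) c i *: y i].

Lemma Tl0 n : Tl n 0 0.
Proof. by exists 0%N, (fun=> 0); split => // [i|]; rewrite ?normr0 ?big_ord0. Qed.
Lemma Tl_t0 n g t : Tl n g t -> 0 <= t.
Proof. by case=> N [c [_ _ h _]]; apply: le_trans (h 0%N). Qed.
Lemma TlD n g1 g2 t1 t2 : Tl n g1 t1 -> Tl n g2 t2 -> Tl n (g1 + g2) (t1 + t2).
Proof.
case=> N1 [c1 [a1 b1 h1 ->]] [N2 [c2 [a2 b2 h2 ->]]].
exists (maxn N1 N2), (fun i => c1 i + c2 i); split.
- by move=> i hi; rewrite a1 ?a2 ?addr0.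
- by move=> i hi; rewrite b1 ?b2 ?addr0 //; [move: hi; rewrite geq_max => /andP[]..].
- by move=> i; apply: le_trans (ler_normD _ _) _; apply: lerD.
rewrite (@sum_pad _ (fun i => c1 i *: y i) N1 (maxn N1 N2)) ?leq_maxl //; last first.
  by move=> i hi; rewrite b1 ?scale0r.
rewrite (@sum_pad _ (fun i => c2 i *: y i) N2 (maxn N1 N2)) ?leq_maxr //; last first.
  by move=> i hi; rewrite b2 ?scale0r.
by rewrite -big_split; apply: eq_bigr => i _; rewrite scalerDl.
Qed.
Lemma TlZ n g t (s : R) : 0 <= s -> Tl n g t -> Tl n (s *: g) (s * t).
Proof.
move=> s0 [N [c [a b h ->]]]; exists N, (fun i => s * c i); split.
- by move=> i hi; rewrite a ?mulr0.
- by move=> i hi; rewrite b ?mulr0.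
- by move=> i; rewrite normrM ger0_norm // ler_wpM2l.
by rewrite scaler_sumr; apply: eq_bigr => i _; rewrite scalerA.
Qed.
Lemma TlN n g t : Tl n g t -> Tl n (- g) t.
Proof.
move=> [N [c [a b h ->]]]; exists N, (fun i => - c i); split.
- by move=> i hi; rewrite a ?oppr0.
- by move=> i hi; rewrite b ?oppr0.
- by move=> i; rewrite normrN.
by rewrite -sumrN; apply: eq_bigr => i _; rewrite scaleNr.
Qed.

Lemma Phi_bound N w u : `|Phi N w u| <= (\sum_(i < N) `|w i|) * A * nrm u.
Proof.
rewrite /Phi; apply: le_trans (ler_norm_sum _ _ _) _.
rewrite -mulrA mulr_suml; apply: ler_sum => i _; rewrite normrM.
by apply: ler_wpM2l => //.
Qed.

Lemma approx (kappa eps : R) f Nf (a : nat -> R) n (delta : R) :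
  0 < kappa -> kappa < eps -> 0 < delta ->
  (forall i, (Nf <= i)%N -> a i = 0) -> f = \sum_(i < Nf) a i *: y i -> Pk kappa f ->
  exists N (c : nat -> R), [/\ (forall i, (i <= n)%N -> c i = 0),
    (forall i, (N <= i)%N -> c i = 0), (forall i, `|c i| <= delta) &
    nrm (f + \sum_(i < N) c i *: y i) < eps].
Proof.
move=> k0 keps d0 ha fE Pf.
have e0 : 0 < eps by apply: lt_trans keps.
apply: contrapT => H.
have H' : forall g t, Tl n g t -> t <= delta -> eps <= nrm (f + g).
  move=> g t [N [c [h1 h2 h3 ->]]] ht; rewrite leNgt; apply/negP => hlt; apply: H.
  by exists N, c; split => // i; apply: le_trans (h3 i) ht.
set lam := eps / delta.
have lam0 : 0 < lam by rewrite divr_gt0.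
pose Q u := [set x | exists g t, Tl n g t /\ x = nrm (u + g) + lam * t].
pose q u := inf (Q u).
have Qlb : forall u x, Q u x -> 0 <= x.
  move=> u x [g [t [ht ->]]]; apply: addr_ge0; first exact: nrm_ge0.
  by apply: mulr_ge0; [apply: ltW|apply: Tl_t0 ht].
have Qne : forall u, Q u !=set0.
  by move=> u; exists (nrm (u + 0) + lam * 0), 0, 0; split => //; apply: Tl0.
have Qinf : forall u, has_inf (Q u) by move=> u; split => //; exists 0 => x /Qlb.
have qle : forall u g t, Tl n g t -> q u <= nrm (u + g) + lam * t.
  by move=> u g t ht; apply: (infLB (B := 0)) => [x /Qlb|] //; exists g, t.
have qge : forall u B, (forall g t, Tl n g t -> B <= nrm (u + g) + lam * t) -> B <= q u.
  by move=> u B hB; apply: infGE => // x [g [t [ht ->]]]; apply: hB.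
have q_nrm : forall u, q u <= nrm u.
  by move=> u; have := qle u 0 0 (Tl0 n); rewrite addr0 mulr0 addr0.
have q_add : forall u v, q (u + v) <= q u + q v.
  move=> u v; apply/ler_addgt0Pr => e1 e10.
  have e20 : 0 < e1 / 2 by rewrite divr_gt0.
  have [x1 [g1 [t1 [h1 ->]]] hx1] := inf_adherent e20 (Qinf u).
  have [x2 [g2 [t2 [h2 ->]]] hx2] := inf_adherent e20 (Qinf v).
  have := qle (u + v) _ _ (TlD h1 h2).
  have : nrm (u + v + (g1 + g2)) <= nrm (u + g1) + nrm (v + g2).
    by rewrite addrACA; apply: nrmD.
  rewrite -/(q u) -/(q v) in hx1 hx2.
  lra.
have q_hom : forall (s : R) u, 0 < s -> q (s *: u) <= s * q u.
  move=> s u s0; rewrite -ler_pdivrMl //; apply: qge => g t ht.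
  rewrite ler_pdivrMl //; apply: le_trans (qle _ _ _ (TlZ (ltW s0) ht)) _.
  by rewrite -scalerDr nrmZ gtr0_norm // mulrCA -mulrDr.
have q_tail : forall g t, Tl n g t -> q g <= lam * t.
  by move=> g t ht; have := qle g _ _ (TlN ht); rewrite subrr nrm0 add0r.
have q_f : eps <= q f.
  apply: qge => g t ht; have t0 := Tl_t0 ht.
  have := nrm_ge0 (f + g).
  case: (lerP t delta) => htd.
    have := H' g t ht htd; have : 0 <= lam * t by apply: mulr_ge0 => //; apply: ltW.
    lra.
  have : lam * delta <= lam * t by rewrite ler_pM2l // ltW.
  rewrite /lam mulrAC -mulrA mulfV ?gt_eqF // mulr1; lra.
have q0 : q 0 <= 0 by have := q_nrm 0; rewrite nrm0.
pose e := fun k => if k is k'.+1 then y k' else f.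
have hw0 : forall s, s * q f <= q (s *: e 0%N).
  move=> s; rewrite /e; case: (ltrgtP s 0) => hs.
  - have h1 := q_add (s *: f) ((- s) *: f).
    rewrite -scalerDl subrr scale0r in h1.
    have h2 := p0 q_add.
    rewrite (@p_homE _ _ _ q_hom (- s) f) ?oppr_gt0 // in h1; lra.
  - by rewrite (p_homE q_hom).
  - by rewrite hs mul0r scale0r; apply: p0 q_add.
have [w [w0 hw]] := hahn_banach_seq q_add q_hom hw0.
pose W i := w i.+1.
have hW : forall N (c : nat -> R), \sum_(i < N) c i * W i <= q (\sum_(i < N) c i *: y i).
  move=> N c; have := hw N.+1 (fun k => if k is k'.+1 then c k' else 0).
  by rewrite /vec !big_ord_recl /= mul0r scale0r !add0r.
have hWf : eps <= \sum_(i < Nf) a i * W i.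
  have := hw Nf.+1 (fun k => if k is k'.+1 then - a k' else 1).
  rewrite /vec !big_ord_recl /= w0 mul1r scale1r.
  have -> : \sum_(i < Nf) - a (0 + i)%N *: y (0 + i)%N = - f.
    by rewrite fE -sumrN; apply: eq_bigr => i _; rewrite add0n scaleNr.
  have -> : \sum_(i < Nf) - a (0 + i)%N * w (bump 0 i) = - \sum_(i < Nf) a i * W i.
    by rewrite -sumrN; apply: eq_bigr => i _; rewrite add0n mulNr.
  rewrite subrr; lra.
have hTail : forall M, \sum_(i < M) (if (n < i)%N then `|W i| else 0) <= lam.
  move=> M; pose c := fun i => if (n < i)%N && (i < M)%N then Num.sg (W i) else 0.
  have hT : Tl n (\sum_(i < M) c i *: y i) 1.
    exists M, c; split => //.
    - by move=> i hi; rewrite /c ltnNge hi.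
    - by move=> i hi; rewrite /c (ltnNge i M) hi andbF.
    - move=> i; rewrite /c; case: ifP => _; rewrite ?normr0 // normr_sg.
      by case: (_ != 0).
  have := hW M c; have := q_tail _ _ hT; rewrite mulr1.
  have -> : \sum_(i < M) c i * W i = \sum_(i < M) (if (n < i)%N then `|W i| else 0).
    apply: eq_bigr => i _; rewrite /c ltn_ord andbT; case: ifP => _; rewrite ?mul0r //.
    by rewrite -normrEsg.
  lra.
pose S M := \sum_(i < M) (if (n < i)%N then `|W i| else 0).
have Smono : forall M M', (M <= M')%N -> S M <= S M'.
  move=> M M' hM; rewrite /S (big_ord_widen M' (fun i => if (n < i)%N then `|W i| else 0)) //.
  rewrite big_mkcond /=; apply: ler_sum => i _; case: ifP => _ //; case: ifP => _ //.
set th := (eps - kappa) / (2 * A * kappa).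
have th0 : 0 < th by rewrite /th divr_gt0 ?subr_gt0 // !mulr_gt0.
have hsup : has_sup [set S M | M in [set: nat]].
  split; first by exists (S 0%N), 0%N.
  by exists lam => x [M _ <-]; apply: hTail.
have [x [M1 _ <-] hx] := sup_adherent th0 hsup.
set N0 := maxn (maxn M1 Nf) n.+1.
have hN0n : (n < N0)%N by rewrite leq_maxr.
have hN0f : (Nf <= N0)%N by rewrite (leq_trans (leq_maxr M1 Nf)) ?leq_maxl.
have hN01 : (M1 <= N0)%N by rewrite (leq_trans (leq_maxl M1 Nf)) ?leq_maxl.
have split_sum : forall (F : nat -> R) M, (N0 <= M)%N ->
    \sum_(i < M) F i = \sum_(i < N0) F i + \sum_(i < M) (if (N0 <= i)%N then F i else 0).
  move=> F M hM; symmetry; rewrite (@big_ord_widen _ _ _ N0 M F) // big_mkcond -big_split /=.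
  by apply: eq_bigr => i _; case: ltnP => _; rewrite ?addr0 ?add0r.
have tailN0 : forall M, (N0 <= M)%N ->
    \sum_(i < M) (if (N0 <= i)%N then `|W i| else 0) <= th.
  move=> M hM; have := split_sum (fun i => if (n < i)%N then `|W i| else 0) M hM.
  have -> : \sum_(i < M) (if (N0 <= i)%N then if (n < i)%N then `|W i| else 0 else 0) =
            \sum_(i < M) (if (N0 <= i)%N then `|W i| else 0).
    apply: eq_bigr => i _; case: ifP => // h; by rewrite (leq_trans hN0n h).
  rewrite -/(S M) -/(S N0) => hSM.
  have h1 : S M <= sup [set S M | M in [set: nat]].
    by apply: (supUB (B := lam)) => [y0 [M2 _ <-]|]; [apply: hTail|exists M].
  have h2 := Smono _ _ hN01.
  lra.
have A1th : 0 <= 1 + A * th by have := mulr_gt0 A0 th0; lra.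
pose C := A * \sum_(i < N0) `|W i|.
have C0 : 0 <= C by apply: mulr_ge0; [apply: ltW|apply: sumr_ge0 => i _].
have hPhiB : forall u, `|Phi N0 W u| <= (1 + A * th) * nrm u.
  move=> u; apply: (@le_eps _ _ _ (1 + A * th + C)); first by lra.
  move=> eta eta0.
  have [M [c1 hz]] := dense u eta0.
  set M' := maxn M N0.
  pose c := fun i => if (i < M)%N then c1 i else 0.
  have hc : forall i, (M' <= i)%N -> c i = 0.
    by move=> i hi; rewrite /c ltnNge (leq_trans (leq_maxl M N0) hi).
  have hc' : forall i, (M <= i)%N -> c i = 0 by move=> i hi; rewrite /c ltnNge hi.
  have zE : \sum_(i < M) c1 i *: y i = \sum_(i < M') c i *: y i.
    rewrite -(@sum_pad _ (fun i => c i *: y i) M M') ?leq_maxl //; last first.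
      by move=> i hi; rewrite hc' ?scale0r.
    by apply: eq_bigr => i _; rewrite /c ltn_ord.
  rewrite zE in hz; set z := \sum_(i < M') c i *: y i in hz.
  have hM' : (N0 <= M')%N by rewrite leq_maxr.
  have hPz : Phi N0 W z = \sum_(i < N0) c i * W i.
    by rewrite /Phi; apply: eq_bigr => i _; rewrite /z ys_comb_supp // mulrC.
  have hqz : `|\sum_(i < M') c i * W i| <= nrm z.
    rewrite ler_norml; apply/andP; split; last first.
      by apply: le_trans (hW M' c) (q_nrm _).
    have := hW M' (fun i => - c i).
    have -> : \sum_(i < M') - c i *: y i = - z.
      by rewrite /z -sumrN; apply: eq_bigr => i _; rewrite scaleNr.
    have -> : \sum_(i < M') - c i * W i = - \sum_(i < M') c i * W i.
      by rewrite -sumrN; apply: eq_bigr => i _; rewrite mulNr.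
    have := q_nrm (- z); rewrite nrmN; lra.
  have hsplit := split_sum (fun i => c i * W i) M' hM'.
  have htail : `|\sum_(i < M') (if (N0 <= i)%N then c i * W i else 0)| <= A * nrm z * th.
    apply: le_trans (ler_norm_sum _ _ _) _.
    apply: le_trans (_ : _ <= \sum_(i < M') (A * nrm z) * (if (N0 <= i)%N then `|W i| else 0)) _.
      apply: ler_sum => i _; case: ifP => _; rewrite ?normr0 ?mulr0 //.
      rewrite normrM ler_wpM2r //.
      by have := ysA i z; rewrite /z ys_comb_supp.
    rewrite -mulr_sumr; apply: ler_wpM2l; last exact: tailN0.
    by apply: mulr_ge0; [apply: ltW|apply: nrm_ge0].
  have hPz' : `|Phi N0 W z| <= (1 + A * th) * nrm z.
    rewrite hPz.
    have -> : \sum_(i < N0) c i * W i = \sum_(i < M') c i * W i -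
       \sum_(i < M') (if (N0 <= i)%N then c i * W i else 0) by rewrite hsplit addrK.
    apply: le_trans (ler_normB _ _) _; lra.
  have hPuz : `|Phi N0 W (u - z)| <= C * nrm (u - z).
    by apply: le_trans (Phi_bound _ _ _) _; rewrite /C (mulrC A).
  have hnz : nrm z <= nrm u + eta.
    have := nrmB u (u - z); rewrite opprB addrC subrK => h; apply: le_trans h _.
    by rewrite lerD2l ltW.
  have -> : u = z + (u - z) by rewrite addrC subrK.
  rewrite PhiD; apply: le_trans (ler_normD _ _) _.
  have h1 : (1 + A * th) * nrm z <= (1 + A * th) * (nrm u + eta) by apply: ler_wpM2l.
  have h2 : C * nrm (u - z) <= C * eta by apply: ler_wpM2l => //; apply: ltW.
  have -> : z + (u - z) = u by rewrite addrC subrK.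
  nra.
have hPf : Phi N0 W f = \sum_(i < Nf) a i * W i.
  have hysf : forall i, ys i f = a i by move=> i; rewrite fE ys_comb_supp.
  rewrite /Phi; under eq_bigr => i _ do rewrite hysf.
  rewrite (@sum_pad _ (fun i => a i * W i) Nf N0) //; last by move=> i hi; rewrite ha ?mul0r.
  by apply: eq_bigr => i _; rewrite mulrC.
have hB : 0 < 1 + A * th by have := mulr_gt0 A0 th0; lra.
have := Pf N0 W (1 + A * th) hB hPhiB; rewrite hPf.
have hth : A * th * kappa = (eps - kappa) / 2.
  by rewrite /th; field; rewrite !gt_eqF.
have := ler_norm (\sum_(i < Nf) a i * W i).
nra.
Qed.

Lemma core (eps r : R) (m : nat) : 0 < eps -> 0 < r ->
  exists N (c : nat -> R), [/\ (forall i, (i <= m)%N -> c i = 0),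
    (forall i, (N <= i)%N -> c i = 0), nrm (\sum_(i < N) c i *: y i) = r,
    (forall i, `|c i| <= eps / 2) &
    forall n (delta : R), 0 < delta -> exists N' (c' : nat -> R),
      [/\ (forall i, (i <= n)%N -> c' i = 0), (forall i, (N' <= i)%N -> c' i = 0),
          (forall i, `|c' i| <= delta) &
          nrm (\sum_(i < N) c i *: y i + \sum_(i < N') c' i *: y i) < eps]].
Proof.
move=> e0 r0.
set kappa := Num.min (eps / (2 * A)) (eps / 2).
have k0 : 0 < kappa by rewrite lt_min !divr_gt0 // mulr_gt0.
have k1 : kappa <= eps / (2 * A) by rewrite ge_min lexx.
have k2 : kappa <= eps / 2 by rewrite ge_min lexx orbT.
have [N [c [h1 [h2 [h3 Pf]]]]] := choose_f m k0 r0.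
exists N, c; split => //.
- move=> i.
  have hB : forall u, `|Phi i.+1 (fun j => (j == i)%:R) u| <= A * nrm u.
    by move=> u; rewrite Phi_ys; apply: ysA.
  have := Pf _ _ _ A0 hB; rewrite Phi_ys ys_comb_supp // => h'.
  apply: le_trans h' _.
  have : A * kappa <= A * (eps / (2 * A)) by rewrite ler_pM2l.
  have -> : A * (eps / (2 * A)) = eps / 2 by field; rewrite gt_eqF.
  done.
- move=> n delta d0.
  have keps : kappa < eps by apply: le_lt_trans k2 _; lra.
  have [N' [c' [a1 a2 a3 a4]]] := approx n k0 keps d0 h2 (erefl _) Pf.
  by exists N', c'; split.
Qed.

End Core.


Section Generic.
Context {K : numFieldType} {X : normedModType K}.

Lemma dual_lin (g : X -> K) : dual_elem g ->
  [/\ g 0 = 0, forall u v, g (u + v) = g u + g v & forall a u, g (a *: u) = a * g u].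
Proof.
case=> hl _.
have g0 : g 0 = 0.
  have := hl 1 0 0; rewrite scale1r addr0 mul1r => h.
  by apply: (addrI (g 0)); rewrite addr0 -h.
split => //.
  by move=> u v; have := hl 1 u v; rewrite scale1r mul1r.
by move=> a u; have := hl a u 0; rewrite addr0 g0 addr0.
Qed.

Lemma cont_bound (g : X -> K) : dual_elem g ->
  exists2 B : K, 0 < B & forall u, `|g u| <= B * `|u|.
Proof.
move=> hg; have [g0 gD gZ] := dual_lin hg.
case: hg => _ hc.
have := @cvgr_dist_lt _ _ _ _ _ g (g 0) (hc 0) 1 ltr01; rewrite g0 => H.
have /nbhs_norm0P [e /= e0 he] := H (nbhs_filter _).
exists (2 / e); first by rewrite divr_gt0.
move=> u; have [->|u0] := eqVneq u 0; first by rewrite g0 !normr0 mulr0.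
have nu : 0 < `|u| by rewrite normr_gt0.
set a := e / (2 * `|u|).
have a0 : 0 < a by rewrite divr_gt0 // mulr_gt0.
have : `|a *: u| < e.
  rewrite normrZ gtr0_norm // /a.
  have -> : e / (2 * `|u|) * `|u| = e / 2 by field; rewrite gt_eqF.
  by rewrite ltr_pdivrMr // ltr_pMr // ltr1n.
move=> /he; rewrite sub0r normrN gZ normrM gtr0_norm // => h.
rewrite -(ler_pM2l a0); apply: ltW; apply: lt_le_trans h _.
rewrite /a le_eqVlt; apply/orP; left; apply/eqP; field; rewrite ?gt_eqF //.
Qed.

Lemma dense_span (x : nat -> X) : closure (span_seq x) = setT ->
  forall v (eta : K), 0 < eta ->
  exists N (c : nat -> K), `|v - \sum_(i < N) c i *: x i| < eta.
Proof.
move=> hcl v eta eta0.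
have : closure (span_seq x) v by rewrite hcl.
move=> /(_ (ball v eta)) [].
  by apply: nbhsx_ballx.
move=> w [[N [c ->]] hb]; exists N, c.
by move: hb; rewrite -ball_normE.
Qed.
End Generic.


Lemma sum_tail (Z : zmodType) (F : nat -> Z) m N :
  (forall i, (i <= m)%N -> F i = 0) ->
  \sum_(i < N) F i = \sum_(m.+1 <= i < N) F i.
Proof.
move=> hF; elim: N => [|N IH]; first by rewrite big_ord0 big_geq.
rewrite big_ord_recr /= IH.
case: (leqP m.+1 N) => h; first by rewrite [in RHS]big_nat_recr.
rewrite hF ?addr0; last by rewrite -ltnS.
by rewrite !big_geq // ltnW.
Qed.

Lemma dual_norm_scale {K : numFieldType} {X : normedModType K} (g : X -> K) (s : K) :
  dual_norm g s -> 0 < s -> dual_norm (fun u => s^-1 * g u) 1.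
Proof.
move=> [h1 h2] s0; split.
  move=> t [u hu <-]; rewrite normrM gtr0_norm ?invr_gt0 //.
  rewrite -(ler_pM2l s0) mulrA mulfV ?gt_eqF // mul1r mulr1.
  by apply: h1; exists u.
move=> t ht; have : t * s < s by rewrite -{2}(mul1r s) ltr_pM2r.
move=> /h2 [e [u hu <-] he]; exists (s^-1 * `|g u|).
  by exists u => //; rewrite normrM gtr0_norm // invr_gt0.
by rewrite -(ltr_pM2l s0) mulrA mulfV ?gt_eqF // mul1r mulrC.
Qed.

Section RealLayer.
Variable (R : realType) (X : normedModType R).

Lemma real_dual_norm (g : X -> R) : dual_elem g ->
  exists s, [/\ dual_norm g s, 0 <= s & forall u, `|g u| <= s * `|u|].
Proof.
move=> hg; have [g0 gD gZ] := dual_lin hg.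
have [B B0 hB] := cont_bound hg.
set S := [set `|g u| | u in [set u : X | `|u| <= 1]].
have Sne : S !=set0 by exists (`|g 0|), 0 => //=; rewrite normr0.
have SB : forall t, S t -> t <= B.
  move=> t [u /= hu <-]; apply: le_trans (hB u) _.
  by rewrite -{2}(mulr1 B) ler_pM2l.
have hs1 : forall t, S t -> t <= sup S by move=> t; apply: (supUB SB).
exists (sup S); split.
- by split => // t ht; apply: sup_gt.
- have [t St] := Sne; apply: le_trans (hs1 _ St); case: St => u _ <-; exact: normr_ge0.
- move=> u; have [->|u0] := eqVneq u 0; first by rewrite g0 !normr0 mulr0.
  have nu : 0 < `|u| by rewrite normr_gt0.
  have : S (`|g (`|u|^-1 *: u)|).
    exists (`|u|^-1 *: u) => //=; rewrite normrZ normrV ?unitfE ?gt_eqF //.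
    by rewrite normr_id mulVf ?gt_eqF.
  move=> /hs1; rewrite gZ normrM normrV ?unitfE ?gt_eqF // normr_id.
  by rewrite ler_pdivrMl // mulrC.
Qed.

End RealLayer.


Section RealCase.
Variable (R : realType) (X : completeNormedModType R).

Lemma comb_lin (xs : nat -> X -> R) (hd : forall n, dual_elem (xs n)) N (w : nat -> R) :
  let G := fun u => \sum_(i < N) w i * xs i u in
  dual_elem G.
Proof.
move=> G; split.
  move=> a u v; rewrite /G mulr_sumr -big_split; apply: eq_bigr => i _.
  by case: (hd i) => -> _; rewrite mulrDr mulrCA.
rewrite /G; elim: N {G} => [|N IH] u.
  have -> : (fun u => \sum_(i < 0) w i * xs i u) = fun=> 0.
    by apply/funext => v; rewrite big_ord0.
  exact: cst_continuous.
have -> : (fun u => \sum_(i < N.+1) w i * xs i u) =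
  (fun u => \sum_(i < N) w i * xs i u) + (fun u => w N * xs N u).
  by apply/funext => v; rewrite big_ord_recr.
apply: continuousD; first exact: IH.
have := @continuousM _ _ (fun=> w N) (xs N) u (@cst_continuous _ _ (w N) u).
by case: (hd N) => _ hc; move/(_ (hc u)).
Qed.

Theorem real_case : lemma3p7_for X.
Proof.
move=> x xs [hcl [hdual hbio]] [a2 ha2] hnn eps r m e0 r0.
set A := Num.max a2 1.
have A0 : 0 < A by rewrite lt_max ltr01 orbT.
have hbnd : forall n u, `|xs n u| <= A * `|u|.
  move=> n u; have [s [hs s0 hsu]] := real_dual_norm (hdual n).
  apply: le_trans (hsu u) _; apply: ler_wpM2r => //.
  by apply: le_trans (ha2 n s hs) _; rewrite le_max lexx.
have ysL : forall n (a : R) (u v : X), xs n (a *: u + v) = a * xs n u + xs n v.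
  by move=> n; case: (hdual n).
have NN : forall kappa : R, 0 < kappa -> exists v : X, `|v| = 1 /\
    forall N w, (forall u, `|Phi xs N w u| <= `|u|) -> `|Phi xs N w v| <= kappa.
  move=> k k0; apply: contrapT => hneg; apply: hnn.
  have hv : forall v : X, `|v| = 1 -> exists g, [/\ dual_span xs g, dual_norm g 1,
      k < `|g v| & forall (a : R) u, g (a *: u) = a * g u].
    move=> v v1; apply: contrapT => hno; apply: hneg; exists v; split => // N w hw.
    rewrite leNgt; apply/negP => hlt; apply: hno.
    have hG := comb_lin hdual N w.
    set G := fun u => \sum_(i < N) w i * xs i u in hG.
    have [s [hs s0 hsu]] := real_dual_norm hG.
    have hGv : k < `|G v| by [].
    have sp : 0 < s.
      apply: lt_le_trans k0 _; apply: le_trans (ltW hGv) _.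
      by have := hsu v; rewrite v1 mulr1.
    have [_ _ GZ] := dual_lin hG.
    exists (fun u => \sum_(i < N) (s^-1 * w i) * xs i u); split.
    - by exists N, (fun i => s^-1 * w i).
    - have -> : (fun u => \sum_(i < N) (s^-1 * w i) * xs i u) = (fun u => s^-1 * G u).
        by apply/funext => u; rewrite /G mulr_sumr; apply: eq_bigr => i _; rewrite mulrA.
      exact: dual_norm_scale.
    - have -> : \sum_(i < N) (s^-1 * w i) * xs i v = s^-1 * G v.
        by rewrite /G mulr_sumr; apply: eq_bigr => i _; rewrite mulrA.
      rewrite normrM gtr0_norm ?invr_gt0 //.
      have s1 : s <= 1.
        case: hs => _ h2; rewrite leNgt; apply/negP => /h2 [e [u hu <-]].
        apply/negP; rewrite -leNgt; apply: le_trans (hw u) _; exact: hu.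
      by apply: lt_le_trans hGv _; rewrite ler_pdivlMl // ler_piMl.
    - move=> a u; rewrite mulr_sumr; apply: eq_bigr => i _.
      by have [_ _ hZ] := dual_lin (hdual i); rewrite hZ mulrCA.
  exists (Num.min k 1).
    by rewrite lt_min k0 ltr01 /= ge_min lexx orbT.
  move=> f t ht.
  have [f0|f0] := eqVneq f 0.
    move: ht; rewrite f0 normr0 mulr0 => ht.
    have x0 : x 0%N != 0.
      apply/eqP => h; have := hbio 0%N 0%N; have [h0 _ _] := dual_lin (hdual 0%N).
      by rewrite h h0 eqxx => /esym/eqP; rewrite oner_eq0.
    have nx0 : 0 < `|x 0%N| by rewrite normr_gt0.
    have u1 : `|(`|x 0%N|^-1 *: x 0%N)| = 1.
      by rewrite normrZ normrV ?unitfE ?gt_eqF // normr_id mulVf ?gt_eqF.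
    have [g [hg1 hg2 _ _]] := hv _ u1.
    exists g; split => //; exact: lt_le_trans ht (normr_ge0 _).
  have nf : 0 < `|f| by rewrite normr_gt0.
  have u1 : `|(`|f|^-1 *: f)| = 1.
    by rewrite normrZ normrV ?unitfE ?gt_eqF // normr_id mulVf ?gt_eqF.
  have [g [hg1 hg2 hg3 hg4]] := hv _ u1.
  exists g; split => //; apply: lt_le_trans ht _.
  have fE : f = `|f| *: (`|f|^-1 *: f) by rewrite scalerA mulfV ?gt_eqF // scale1r.
  rewrite {2}fE hg4 normrM normr_id mulrC ler_pM2l //.
  apply: le_trans (ltW hg3); by rewrite ge_min lexx.
have dense := dense_span hcl.
have [N [c [h1 h2 h3 h4 h5]]] := core (@ler_normD _ _) (@normrZ _ _) ysL hbio A0 hbnd dense NN m e0 r0.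
have hcomb := ys_comb_supp ysL hbio.
exists (\sum_(i < N) c i *: x i); split.
- by exists N, c; apply: sum_tail => i hi; rewrite h1 // scale0r.
- exact: h3.
- exists (eps / 2); first by rewrite ltr_pdivrMr // ltr_pMr // ltr1n.
  by move=> n; rewrite hcomb.
- move=> n hn delta d0.
  have d2 : 0 < delta / 2 by rewrite divr_gt0.
  have [N' [c' [a1 a2' a3 a4]]] := h5 n _ d2.
  exists (\sum_(i < N') c' i *: x i); split => //.
    by exists N', c'; apply: sum_tail => i hi; rewrite a1 // scale0r.
  exists (delta / 2); first by rewrite ltr_pdivrMr // ltr_pMr // ltr1n.
  by move=> k; rewrite hcomb.
Qed.
End RealCase.

Section CTool.
Variable R : realType.
Local Open Scope complex_scope.
Implicit Types (x y z : R[i]) (a b : R).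
Lemma cReD x y : complex.Re (x + y) = complex.Re x + complex.Re y.
Proof. by case: x; case: y. Qed.
Lemma cImD x y : complex.Im (x + y) = complex.Im x + complex.Im y.
Proof. by case: x; case: y. Qed.
Lemma cReN x : complex.Re (- x) = - complex.Re x.
Proof. by case: x. Qed.
Lemma cImN x : complex.Im (- x) = - complex.Im x.
Proof. by case: x. Qed.
Lemma cReMr a z : complex.Re (a%:C * z) = a * complex.Re z.
Proof. by case: z => p q; simpc. Qed.
Lemma cImMr a z : complex.Im (a%:C * z) = a * complex.Im z.
Proof. by case: z => p q; simpc. Qed.
Lemma cRe1 : complex.Re (1 : R[i]) = 1. Proof. by []. Qed.
Lemma cIm1 : complex.Im (1 : R[i]) = 0. Proof. by []. Qed.
Lemma cRe0 : complex.Re (0 : R[i]) = 0. Proof. by []. Qed.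
Lemma cIm0 : complex.Im (0 : R[i]) = 0. Proof. by []. Qed.
Lemma cRei : complex.Re ('i : R[i]) = 0. Proof. by []. Qed.
Lemma cImi : complex.Im ('i : R[i]) = 1. Proof. by []. Qed.
Lemma cRe_pair a b z :
  complex.Re ((a%:C - 'i * b%:C) * z) = a * complex.Re z + b * complex.Im z.
Proof. case: z => p q; simpc. rewrite /=. lra. Qed.
End CTool.

Section CTool2.
Variable R : realType.
Local Open Scope complex_scope.
Implicit Types (x y z : R[i]) (a b : R).
Lemma cge0E z : 0 <= z -> z = (complex.Re z)%:C.
Proof. by move=> h; have := ger0_Im h; case: z h => p q /= _ ->. Qed.
Lemma cRe_ge0 z : 0 <= z -> 0 <= complex.Re z.
Proof. by rewrite lecE => /andP[]. Qed.
Lemma cnormE (T : normedModType R[i]) (v : T) : `|v| = (complex.Re `|v|)%:C.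
Proof. exact: cge0E. Qed.
Lemma cnorm_ge0 (T : normedModType R[i]) (v : T) : 0 <= complex.Re `|v|.
Proof. exact: cRe_ge0. Qed.
Lemma cnorm_real a : `|a%:C| = `|a|%:C :> R[i].
Proof. by rewrite normc_def /= expr0n addr0 sqrtr_sqr. Qed.
Lemma cnorm_i : `|'i| = 1 :> R[i].
Proof. by rewrite normc_def /= expr0n add0r expr1n sqrtr1. Qed.
Lemma cRe_le_norm z : `|complex.Re z| <= complex.Re `|z|.
Proof. by have := normc_ge_Re z; rewrite [X in _ <= X](cge0E (normr_ge0 z)) lecR. Qed.
Lemma cIm_le_norm z : `|complex.Im z| <= complex.Re `|z|.
Proof.
have := cRe_le_norm (z * 'i); rewrite ReiNIm normrN normrM cnorm_i mulr1 //.
Qed.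
Lemma cRe_monoN z w : 0 <= z -> 0 <= w -> (z <= w) = (complex.Re z <= complex.Re w).
Proof. by move=> hz hw; rewrite (cge0E hz) (cge0E hw) lecR. Qed.
End CTool2.


Section Generic2.
Context {K : numFieldType} {X : normedModType K}.

Lemma comb_linK (xs : nat -> X -> K) (hd : forall n, dual_elem (xs n)) N (w : nat -> K) :
  dual_elem (fun u => \sum_(i < N) w i * xs i u).
Proof.
split.
  move=> a u v; rewrite mulr_sumr -big_split; apply: eq_bigr => i _.
  by case: (hd i) => -> _; rewrite mulrDr mulrCA.
elim: N => [|N IH] u.
  have -> : (fun u => \sum_(i < 0) w i * xs i u) = fun=> 0.
    by apply/funext => v; rewrite big_ord0.
  exact: cst_continuous.
have -> : (fun u => \sum_(i < N.+1) w i * xs i u) =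
  (fun u => \sum_(i < N) w i * xs i u) + (fun u => w N * xs N u).
  by apply/funext => v; rewrite big_ord_recr.
apply: continuousD; first exact: IH.
have := @continuousM _ _ (fun=> w N) (xs N) u (@cst_continuous _ _ (w N) u).
by case: (hd N) => _ hc; move/(_ (hc u)).
Qed.

Lemma xs_comb (x : nat -> X) (xs : nat -> X -> K) (hd : forall n, dual_elem (xs n))
  (hb : forall n k, xs n (x k) = (n == k)%:R) j N (d : nat -> K) :
  (forall i, (N <= i)%N -> d i = 0) -> xs j (\sum_(i < N) d i *: x i) = d j.
Proof.
move=> hdN; have [g0 gD gZ] := dual_lin (hd j).
have hs : forall M (F : nat -> X), xs j (\sum_(i < M) F i) = \sum_(i < M) xs j (F i).
  by move=> M F; elim: M => [|M IH]; rewrite ?big_ord0 ?g0 // !big_ord_recr /= gD IH.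
rewrite (hs N (fun i => d i *: x i)).
under eq_bigr => i _ do rewrite gZ hb.
case: (ltnP j N) => hj.
  rewrite (bigD1 (Ordinal hj)) //= eqxx mulr1 big1 ?addr0 // => i hi.
  by rewrite eq_sym -(inj_eq val_inj) /= in hi; rewrite (negbTE hi) mulr0.
rewrite hdN // big1 // => i _; rewrite (_ : (j == i) = false) ?mulr0 //.
by apply/negbTE; rewrite neq_ltn (leq_trans (ltn_ord i) hj) orbT.
Qed.
End Generic2.


Lemma sum_pairs (Z : zmodType) (F : nat -> Z) N :
  \sum_(k < N.*2) F k = \sum_(j < N) (F j.*2 + F j.*2.+1).
Proof.
elim: N => [|N IH]; first by rewrite !big_ord0.
by rewrite doubleS !big_ord_recr /= IH addrA.
Qed.

Lemma eq_oddhalf (n k : nat) : (n == k) = (odd n == odd k) && (n./2 == k./2).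
Proof.
apply/eqP/andP => [->|[/eqP h1 /eqP h2]]; first by [].
by rewrite -[n]odd_double_half -[k]odd_double_half h1 h2.
Qed.

Section CTool3.
Variable R : realType.
Local Open Scope complex_scope.
Lemma cnormEs (z : R[i]) : `|z| = (complex.Re `|z|)%:C.
Proof. exact: cge0E (normr_ge0 z). Qed.
Lemma cgt0 (z : R[i]) : 0 < z -> 0 < complex.Re z /\ z = (complex.Re z)%:C.
Proof.
move=> h; split; first by move: h; rewrite ltcE => /andP[].
by apply: cge0E; apply: ltW.
Qed.
Lemma cone : (1%:C : R[i]) = 1. Proof. by []. Qed.
Lemma cRe_sum N (F : nat -> R[i]) : complex.Re (\sum_(i < N) F i) = \sum_(i < N) complex.Re (F i).
Proof. by elim: N => [|N IH]; rewrite ?big_ord0 // !big_ord_recr /= cReD IH. Qed.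
End CTool3.


Section ComplexCase.
Variable (R : realType) (X : completeNormedModType R[i]).
Local Open Scope complex_scope.

Definition XR : Type := X.
HB.instance Definition _ := GRing.Zmodule.on XR.
Definition scR (a : R) (v : XR) : XR := ((a%:C) *: (v : X) : X).
Lemma scR_A a b v : scR a (scR b v) = scR (a * b) v.
Proof. by rewrite /scR scalerA -rmorphM. Qed.
Lemma scR_1 : left_id 1 scR.
Proof. by move=> v; rewrite /scR rmorph1 scale1r. Qed.
Lemma scR_Dr : right_distributive scR +%R.
Proof. by move=> a u v; rewrite /scR scalerDr. Qed.
Lemma scR_Dl v : {morph scR^~ v: a b / a + b}.
Proof. by move=> a b; rewrite /scR rmorphD scalerDl. Qed.
HB.instance Definition _ := GRing.Zmodule_isLmodule.Build R XR scR_A scR_1 scR_Dr scR_Dl.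
Lemma scE (a : R) (u : XR) : a *: u = ((a%:C) *: (u : X) : X).
Proof. by []. Qed.

Lemma cplx_dual_norm (g : X -> R[i]) : dual_elem g ->
  exists s : R, [/\ dual_norm g s%:C, 0 <= s & forall u, `|g u| <= s%:C * `|u|].
Proof.
move=> hg; have [g0 gD gZ] := dual_lin hg.
have [B B0 hB] := cont_bound hg.
have [B0' BE] := cgt0 B0.
set S := [set complex.Re `|g u| | u in [set u : X | complex.Re `|u| <= 1]].
have Sne : S !=set0.
  by exists (complex.Re `|g 0|), 0 => //=; rewrite normr0.
have SB : forall t, S t -> t <= complex.Re B.
  move=> t [u /= hu <-].
  have h := hB u; rewrite (cnormEs (g u)) (cnormE u) BE -rmorphM lecR in h.
  apply: le_trans h _; rewrite -{2}(mulr1 (complex.Re B)) ler_wpM2l //; exact: ltW.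
have hs1 : forall t, S t -> t <= sup S by move=> t; apply: (supUB SB).
have s0 : 0 <= sup S.
  have [t St] := Sne; apply: le_trans (hs1 _ St); case: St => u _ <-; exact: cRe_ge0 (normr_ge0 _).
exists (sup S); split => //.
- split.
  + move=> t [u hu <-]; rewrite cnormEs lecR; apply: hs1; exists u => //.
    by move: hu; rewrite /= (cnormE u) -cone lecR.
  + move=> t; rewrite ltcE /= => /andP[/eqP hIm hRe].
    have [e [u hu <-] he] := sup_gt Sne hRe.
    exists `|g u|; first by exists u => //; move: hu; rewrite /= (cnormE u) -cone lecR.
    have -> : t = (complex.Re t)%:C by case: t hIm {hRe he} => p q /= <-.
    by rewrite cnormEs ltcR.
- move=> u; have [->|u0] := eqVneq u 0; first by rewrite g0 !normr0 mulr0.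
  have nu : 0 < `|u| by rewrite normr_gt0.
  have : S (complex.Re `|g (`|u|^-1 *: u)|).
    exists (`|u|^-1 *: u) => //=; rewrite normrZ normrV ?unitfE ?gt_eqF //.
    by rewrite normr_id mulVf ?gt_eqF // cRe1.
  move=> /hs1; rewrite -lecR -cnormEs gZ normrM normrV ?unitfE ?gt_eqF // normr_id.
  by rewrite ler_pdivrMl // mulrC.
Qed.

End ComplexCase.

Section ComplexMain.
Variable (R : realType) (X : completeNormedModType R[i]).
Local Open Scope complex_scope.
Local Notation XR := (XR X).

Theorem complex_case : lemma3p7_for X.
Proof.
move=> x xs [hcl [hdual hbio]] [a2 ha2] hnn eps r m e0 r0.
set A := Num.max (complex.Re a2) 1.
have A0 : 0 < A by rewrite lt_max ltr01 orbT.
have hbnd : forall n u, `|xs n u| <= A%:C * `|u|.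
  move=> n u; have [s [hs s0 hsu]] := cplx_dual_norm (hdual n).
  apply: le_trans (hsu u) _; apply: ler_wpM2r => //.
  have := ha2 n _ hs; rewrite lecE => /andP[_ h].
  by rewrite lecR; apply: le_trans h _; rewrite le_max lexx.
pose y : nat -> XR := fun k => ((if odd k then 'i else 1) *: x k./2 : X).
pose ys : nat -> XR -> R := fun k u =>
  if odd k then complex.Im (xs k./2 u) else complex.Re (xs k./2 u).
pose nrm : XR -> R := fun u => complex.Re `|u : X|.
have nrmD : forall u v : XR, nrm (u + v) <= nrm u + nrm v.
  move=> u v; rewrite /nrm; have := ler_normD (u : X) (v : X).
  by rewrite (cnormE (u + v : X)) (cnormE (u : X)) (cnormE (v : X)) -rmorphD lecR.
have nrmZ : forall (a : R) (u : XR), nrm (a *: u) = `|a| * nrm u.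
  by move=> a u; rewrite /nrm scE normrZ cnorm_real cReMr.
have ysL : forall n (a : R) (u v : XR), ys n (a *: u + v) = a * ys n u + ys n v.
  move=> n a u v; rewrite /ys scE; have [_ gD gZ] := dual_lin (hdual n./2).
  by case: (odd n); rewrite gD gZ ?cReD ?cImD ?cReMr ?cImMr.
have ysB : forall n k, ys n (y k) = (n == k)%:R.
  move=> n k; rewrite /ys /y; have [_ gD gZ] := dual_lin (hdual n./2).
  rewrite gZ hbio [n == k]eq_oddhalf.
  by case: (odd n); case: (odd k); case: (n./2 == k./2);
    rewrite /= ?mulr1n ?mulr0n ?mulr1 ?mulr0 ?mul1r /= ?add0r ?addr0 ?subr0 ?mul0r ?mulr0 ?oppr0 ?mulr1.
have ysA : forall n u, `|ys n u| <= A * nrm u.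
  move=> n u; have h := hbnd n./2 u.
  rewrite (cnormEs (xs _ _)) (cnormE (u : X)) -rmorphM lecR in h.
  rewrite /ys /nrm; case: (odd n); apply: le_trans h.
    exact: cIm_le_norm.
  exact: cRe_le_norm.
pose D (c : nat -> R) j : R[i] := (c j.*2)%:C + 'i * (c j.*2.+1)%:C.
have pair_comb : forall (c : nat -> R) N, (forall k, (N.*2 <= k)%N -> c k = 0) ->
    ((\sum_(k < N.*2) c k *: y k : XR) : X) = \sum_(j < N) D c j *: x j.
  move=> c N hc; rewrite (sum_pairs (fun k => c k *: y k)); apply: eq_bigr => j _.
  rewrite !scE /y /= !odd_double /= doubleK uphalf_double scale1r scalerA.
  rewrite /D (mulrC 'i); exact: (esym (scalerDl _ _ _)).
have dense : forall (v : XR) (eta : R), 0 < eta ->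
    exists N (c : nat -> R), nrm (v - \sum_(i < N) c i *: y i) < eta.
  move=> v eta eta0.
  have eta0' : 0 < eta%:C by rewrite ltcR.
  have [N [d hd]] := dense_span hcl (v : X) eta0'.
  pose c := fun k => if (k < N.*2)%N then
      (if odd k then complex.Im (d k./2) else complex.Re (d k./2)) else 0.
  exists N.*2, c.
  rewrite /nrm (pair_comb c N); last by move=> k hk; rewrite /c ltnNge hk.
  have -> : \sum_(j < N) D c j *: x j = \sum_(j < N) d j *: x j.
    apply: eq_bigr => j _; rewrite /D /c ltn_double ltn_Sdouble ltn_ord.
    rewrite /= !odd_double /= doubleK uphalf_double.
    by rewrite [d j in RHS]complexE.
  by move: hd; rewrite (cnormE (_ - _)) ltcR.
have NN : forall kappa : R, 0 < kappa -> exists v : XR, nrm v = 1 /\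
    forall N w, (forall u, `|Phi ys N w u| <= nrm u) -> `|Phi ys N w v| <= kappa.
  move=> k k0; apply: contrapT => hneg; apply: hnn.
  have hv : forall v : X, `|v| = 1 -> exists g, [/\ dual_span xs g, dual_norm g 1,
      k%:C < `|g v| & forall (a : R[i]) u, g (a *: u) = a * g u].
    move=> v v1; apply: contrapT => hno; apply: hneg; exists v; split.
      by rewrite /nrm v1.
    move=> N w hw; rewrite leNgt; apply/negP => hlt; apply: hno.
    pose w' := fun k => if (k < N)%N then w k else 0.
    pose cf := fun j => (w' j.*2)%:C - 'i * (w' j.*2.+1)%:C.
    pose G := fun u => \sum_(j < N) cf j * xs j u.
    have hG : dual_elem G := comb_linK hdual N cf.
    have [G0 GD GZ] := dual_lin hG.
    have hPhi : forall u, Phi ys N w u = complex.Re (G u).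
      move=> u; rewrite /Phi.
      have -> : \sum_(i < N) w i * ys i u = \sum_(i < N) w' i * ys i u.
        by apply: eq_bigr => i _; rewrite /w' ltn_ord.
      rewrite (@sum_pad _ (fun i => w' i * ys i u) N N.*2); last first.
        by rewrite -addnn leq_addr.
        by move=> i hi; rewrite /w' ltnNge hi mul0r.
      rewrite (sum_pairs (fun i => w' i * ys i u)) /G (cRe_sum N (fun j => cf j * xs j u)).
      apply: eq_bigr => j _; rewrite /ys /= !odd_double /= doubleK uphalf_double.
      by rewrite /cf cRe_pair.
    have hGb : forall u, `|G u| <= `|u|.
      move=> u; have [z0|z0] := eqVneq (G u) 0; first by rewrite z0 normr0.
      set z := G u.
      have nz : 0 < `|z| by rewrite normr_gt0.
      set th := `|z| / z.
      have hth : `|th| = 1 by rewrite /th normrM normrV ?unitfE // normr_id mulfV ?gt_eqF.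
      have := hw (th *: u : X); rewrite hPhi GZ /th divfK // /nrm normrZ hth mul1r.
      move=> h; rewrite (cnormEs z) (cnormE u) lecR.
      apply: le_trans h; exact: ler_norm.
    have [s [hs s0 hsu]] := cplx_dual_norm hG.
    have hGv : k < complex.Re `|G v|.
      apply: lt_le_trans hlt _; rewrite hPhi; exact: cRe_le_norm.
    have sp : 0 < s.
      apply: lt_trans k0 _; apply: lt_le_trans hGv _.
      have := hsu v; rewrite v1 mulr1 (cnormEs (G v)) lecR //.
    have s1 : s <= 1.
      case: hs => _ h2; rewrite leNgt; apply/negP => hs1.
      have : 1 < s%:C by rewrite -cone ltcR.
      move=> /h2 [e [u hu <-] he].
      by have := lt_le_trans he (le_trans (hGb u) hu); rewrite ltxx.
    have spC : 0 < s%:C by rewrite ltcR.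
    exists (fun u => \sum_(j < N) ((s%:C)^-1 * cf j) * xs j u); split.
    - by exists N, (fun j => (s%:C)^-1 * cf j).
    - have -> : (fun u => \sum_(j < N) ((s%:C)^-1 * cf j) * xs j u) = (fun u => (s%:C)^-1 * G u).
        by apply/funext => u; rewrite /G mulr_sumr; apply: eq_bigr => i _; rewrite mulrA.
      exact: dual_norm_scale.
    - have -> : \sum_(j < N) ((s%:C)^-1 * cf j) * xs j v = (s%:C)^-1 * G v.
        by rewrite /G mulr_sumr; apply: eq_bigr => i _; rewrite mulrA.
      rewrite normrM gtr0_norm ?invr_gt0 //.
      have : k%:C < `|G v| by rewrite (cnormEs (G v)) ltcR.
      move=> h; apply: lt_le_trans h _; rewrite ler_pdivlMl // ler_piMl //.
      by rewrite -cone lecR.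
    - move=> a u; rewrite mulr_sumr; apply: eq_bigr => i _.
      by have [_ _ hZ] := dual_lin (hdual i); rewrite hZ mulrCA.
  exists (Num.min k 1)%:C.
    by rewrite ltcR lt_min k0 ltr01 /= -cone lecR ge_min lexx orbT.
  move=> f t ht.
  have hc : (Num.min k 1)%:C <= k%:C by rewrite lecR ge_min lexx.
  have [f0|f0] := eqVneq f 0.
    move: ht; rewrite f0 normr0 mulr0 => ht.
    have x0 : x 0%N != 0.
      apply/eqP => h; have := hbio 0%N 0%N; have [h0 _ _] := dual_lin (hdual 0%N).
      by rewrite h h0 eqxx => /esym/eqP; rewrite oner_eq0.
    have nx0 : 0 < `|x 0%N| by rewrite normr_gt0.
    have u1 : `|(`|x 0%N|^-1 *: x 0%N)| = 1.
      by rewrite normrZ normrV ?unitfE ?gt_eqF // normr_id mulVf ?gt_eqF.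
    have [g [hg1 hg2 _ _]] := hv _ u1.
    exists g; split => //; exact: lt_le_trans ht (normr_ge0 _).
  have nf : 0 < `|f| by rewrite normr_gt0.
  have u1 : `|(`|f|^-1 *: f)| = 1.
    by rewrite normrZ normrV ?unitfE ?gt_eqF // normr_id mulVf ?gt_eqF.
  have [g [hg1 hg2 hg3 hg4]] := hv _ u1.
  exists g; split => //; apply: lt_le_trans ht _.
  have fE : f = `|f| *: (`|f|^-1 *: f) by rewrite scalerA mulfV ?gt_eqF // scale1r.
  rewrite {2}fE hg4 normrM normr_id mulrC ler_pM2l //.
  by apply: le_trans hc (ltW hg3).
have [re0 eE] := cgt0 e0; have [rr0 rE] := cgt0 r0.
set eps' := complex.Re eps / 2.
have e'0 : 0 < eps' by rewrite divr_gt0.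
have [N [c [h1 h2 h3 h4 h5]]] := core nrmD nrmZ ysL ysB A0 ysA dense NN (m.*2.+1) e'0 rr0.
have NN2 : forall N0 : nat, (N0 <= N0.*2)%N by move=> N0; rewrite -addnn leq_addr.
have toX : forall (c0 : nat -> R) N0, (forall k, (N0 <= k)%N -> c0 k = 0) ->
    ((\sum_(k < N0) c0 k *: y k : XR) : X) = \sum_(j < N0) D c0 j *: x j.
  move=> c0 N0 hc0.
  rewrite (@sum_pad _ (fun k => c0 k *: y k) N0 N0.*2) ?NN2 //; last first.
    by move=> k hk; rewrite hc0 // scale0r.
  by apply: pair_comb => k hk; apply: hc0; exact: leq_trans (NN2 N0) hk.
have hDsupp : forall (c0 : nat -> R) N0, (forall k, (N0 <= k)%N -> c0 k = 0) ->
    forall j, (N0 <= j)%N -> D c0 j = 0.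
  move=> c0 N0 hc0 j hj; rewrite /D !hc0 ?mulr0 ?addr0 //.
    exact: leq_trans hj (leq_trans (NN2 j) (leqnSn _)).
  exact: leq_trans hj (NN2 j).
have hDlow : forall (c0 : nat -> R) n, (forall k, (k <= n.*2.+1)%N -> c0 k = 0) ->
    forall j, (j <= n)%N -> D c0 j = 0.
  move=> c0 n hc0 j hj; rewrite /D !hc0 ?mulr0 ?addr0 //.
    by rewrite ltnS leq_double.
  by rewrite leqW // leq_double.
have hDb : forall (c0 : nat -> R) b, (forall k, `|c0 k| <= b) -> forall j, `|D c0 j| <= (b + b)%:C.
  move=> c0 b hb j; rewrite /D; apply: le_trans (ler_normD _ _) _.
  rewrite normrM cnorm_i mul1r !cnorm_real -rmorphD lecR.
  by apply: lerD.
exists (\sum_(j < N) D c j *: x j); split.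
- exists N, (D c); apply: sum_tail => j hj; rewrite (hDlow c m h1) ?scale0r //.
- rewrite -(toX c N h2) cnormE rE; congr (_%:C); exact: h3.
- exists (complex.Re eps / 2)%:C.
    by rewrite [X in _ < X]eE ltcR ltr_pdivrMr // ltr_pMr // ltr1n.
  move=> j; rewrite (xs_comb hdual hbio _ (hDsupp c N h2)).
  apply: le_trans (hDb c _ h4 j) _; rewrite lecR /eps'; lra.
- move=> n hn delta d0.
  have [rd0 dE] := cgt0 d0.
  have d40 : 0 < complex.Re delta / 4 by rewrite divr_gt0.
  have [N' [c' [b1 b2 b3 b4]]] := h5 (n.*2.+1) _ d40.
  exists (\sum_(j < N') D c' j *: x j); split.
  + exists N', (D c'); apply: sum_tail => j hj; rewrite (hDlow c' n b1) ?scale0r //.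
  + exists (complex.Re delta / 2)%:C.
      by rewrite [X in _ < X]dE ltcR ltr_pdivrMr // ltr_pMr // ltr1n.
    move=> j; rewrite (xs_comb hdual hbio _ (hDsupp c' N' b2)).
    apply: le_trans (hDb c' _ b3 j) _; rewrite lecR; lra.
  + rewrite -(toX c N h2) -(toX c' N' b2).
    have := b4; rewrite /nrm => hb4.
    rewrite cnormE [X in _ < X]eE ltcR; apply: lt_trans hb4 _.
    by rewrite /eps' ltr_pdivrMr // ltr_pMr // ltr1n.
Qed.
End ComplexMain.


Theorem lemma3p7 (R : realType) :
  (forall X : completeNormedModType R, lemma3p7_for X) /\
  (forall X : completeNormedModType R[i], lemma3p7_for X).
Proof. split; [exact: real_case | exact: complex_case]. Qed.
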